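(* Let $A$ be a metrizable abelian topological group and $D\le A$ a dense subgroup. Then the restriction map $\hat A\to\hat D$, $\chi\mapsto\chi|_D$, is an isomorphism of topological groups.
   Context: $\mathbb{T}=\mathbb{R}/\mathbb{Z}$. For an abelian topological group $B$, $\hat B$ is the group of continuous homomorphisms $B\to\mathbb{T}$ with the compact-open topology. *)

(* Defs.v *)
From HB Require Import structures.
From mathcomp Require Import all_boot all_order all_algebra.
From mathcomp Require Import generic_quotient.
From mathcomp Require Import all_classical all_reals.
From mathcomp Require Import topology tvs.

Set Implicit Arguments.
Unset Strict Implicit.
Unset Printing Implicit Defensive.

Import Order.TTheory GRing.Theory Num.Theory.
Import numFieldTopology.Exports.
Local Open Scope classical_set_scope.
Local Open Scope ring_scope.
Local Open Scope quotient_scope.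

Section Torus.
Variable R : realType.

Definition torus_rel (x y : R) : bool := (x - y) \is a Num.int.

Lemma torus_rel_refl : reflexive torus_rel.
Proof. by move=> x; rewrite /torus_rel subrr rpred0. Qed.

Lemma torus_rel_sym : symmetric torus_rel.
Proof. by move=> x y; rewrite /torus_rel -opprB rpredN. Qed.

Lemma torus_rel_trans : transitive torus_rel.
Proof.
move=> y x z; rewrite /torus_rel => h1 h2.
have -> : x - z = (x - y) + (y - z) by rewrite addrA subrK.
by rewrite rpredD.
Qed.

Definition torus_equiv :=
  EquivRel torus_rel torus_rel_refl torus_rel_sym torus_rel_trans.

Definition torusQ := {eq_quot torus_equiv}.

Definition torus : Type := quotient_topology torusQ.
HB.instance Definition _ := Topological.copy torus (quotient_topology torusQ).

Definition torus_pi (x : R) : torus := \pi_torusQ x.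
Definition torus_repr (a : torus) : R := repr (a : torusQ).

Lemma torus_piP (x y : R) : torus_pi x = torus_pi y <-> (x - y) \is a Num.int.
Proof.
rewrite /torus_pi; split; first by move=> /eqquotP.
by move=> h; apply/eqquotP.
Qed.

Lemma torus_reprK (a : torus) : torus_pi (torus_repr a) = a.
Proof. exact: reprK. Qed.

Lemma torus_pi_repr (x : R) : (torus_repr (torus_pi x) - x) \is a Num.int.
Proof. by apply/torus_piP; rewrite torus_reprK. Qed.

Definition torus_zero : torus := torus_pi 0.
Definition torus_opp (a : torus) : torus := torus_pi (- torus_repr a).
Definition torus_add (a b : torus) : torus :=
  torus_pi (torus_repr a + torus_repr b).

Lemma torus_add_pi (x y : R) :
  torus_add (torus_pi x) (torus_pi y) = torus_pi (x + y).
Proof.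
apply/torus_piP.
rewrite (_ : _ - _ = (torus_repr (torus_pi x) - x)
                   + (torus_repr (torus_pi y) - y)); last first.
  by rewrite opprD !addrA; congr (_ + _); rewrite -!addrA; congr (_ + _);
     rewrite addrC.
by rewrite rpredD ?torus_pi_repr.
Qed.

Lemma torus_opp_pi (x : R) : torus_opp (torus_pi x) = torus_pi (- x).
Proof.
apply/torus_piP; rewrite opprK.
rewrite (_ : _ + _ = - (torus_repr (torus_pi x) - x)); last by rewrite opprB addrC.
by rewrite rpredN torus_pi_repr.
Qed.

Lemma torus_ind (P : torus -> Prop) : (forall x, P (torus_pi x)) -> forall a, P a.
Proof. by move=> h a; rewrite -(torus_reprK a). Qed.

Lemma torus_addA : associative torus_add.
Proof.
move=> a b c; elim/torus_ind: a; move=> x; elim/torus_ind: b => y;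
elim/torus_ind: c => z; by rewrite !torus_add_pi addrA.
Qed.

Lemma torus_addC : commutative torus_add.
Proof.
move=> a b; elim/torus_ind: a => x; elim/torus_ind: b => y.
by rewrite !torus_add_pi addrC.
Qed.

Lemma torus_add0 : left_id torus_zero torus_add.
Proof. by move=> a; elim/torus_ind: a => x; rewrite /torus_zero torus_add_pi add0r. Qed.

Lemma torus_addN : left_inverse torus_zero torus_opp torus_add.
Proof.
move=> a; elim/torus_ind: a => x.
by rewrite torus_opp_pi torus_add_pi addNr.
Qed.

HB.instance Definition _ := GRing.isZmodule.Build torus
  torus_addA torus_addC torus_add0 torus_addN.

End Torus.

Definition metrizable (R : realType) (T : topologicalType) : Prop :=
  exists d : T -> T -> R,
    [/\ forall x y, 0 <= d x y,
        forall x y, d x y = 0 <-> x = y,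
        forall x y, d x y = d y x,
        forall x y z, d x z <= d x y + d y z &
        forall (x : T) (U : set T),
          nbhs x U <-> exists2 e : R, 0 < e & [set y | d x y < e] `<=` U].

Definition subgroup (A : zmodType) (D : set A) : Prop :=
  D 0 /\ (forall x y, D x -> D y -> D (x - y)).

Definition is_character (R : realType) (A : topologicalZmodType)
    (chi : A -> torus R) : Prop :=
  continuous chi /\ {morph chi : x y / x + y}.

(** continuous homomorphisms D -> T, for a subgroup D of A carrying the
    subspace topology (the topology on [set_type D] is the initial topology
    of the inclusion) *)
Definition is_character_on (R : realType) (A : topologicalZmodType)
    (D : set A) (psi : set_type D -> torus R) : Prop :=
  continuous psi /\
  (forall x y z : set_type D, set_val z = set_val x + set_val y ->
     psi z = psi x + psi y).

Definition dual (R : realType) (A : topologicalZmodType) :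
    set {compact-open, A -> torus R} :=
  [set chi | is_character chi].

Definition dual_on (R : realType) (A : topologicalZmodType) (D : set A) :
    set {compact-open, set_type D -> torus R} :=
  [set psi | is_character_on psi].

Definition restriction (R : realType) (A : topologicalZmodType) (D : set A)
    (chi : {compact-open, A -> torus R}) : {compact-open, set_type D -> torus R} :=
  fun x => chi (set_val x).

(* Main.v *)
Require Import Defs.
From HB Require Import structures.
From mathcomp Require Import all_boot all_order all_algebra.
From mathcomp Require Import all_classical all_reals.
From mathcomp Require Import topology tvs normedtype set_interval.
From mathcomp Require Import ring lra.
Set Implicit Arguments.
Unset Strict Implicit.
Unset Printing Implicit Defensive.
Import Order.TTheory GRing.Theory Num.Theory.
Import numFieldTopology.Exports.
Local Open Scope classical_set_scope.
Local Open Scope ring_scope.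

Section DZ.
Variable R : realType.
Implicit Types x y k : R.

Definition rnd x : R := (Num.floor (x + 2^-1))%:~R.
Definition dz x : R := `|x - rnd x|.

Lemma rnd_int x : rnd x \is a Num.int.
Proof. exact: intr_int. Qed.

Lemma rnd_itv x : - 2^-1 <= x - rnd x < 2^-1.
Proof.
have /andP[h1 h2] := floor_itv (x + 2^-1).
rewrite /rnd; move: h2; rewrite intrD => h2; apply/andP; split; lra.
Qed.

Lemma dz_ge0 x : 0 <= dz x. Proof. exact: normr_ge0. Qed.

Lemma dz_le_half x : dz x <= 2^-1.
Proof.
have /andP[h1 h2] := rnd_itv x; rewrite /dz.
by rewrite ler_norml; apply/andP; split; lra.
Qed.

Lemma int_far k k' : k \is a Num.int -> k' \is a Num.int -> k != k' ->
  1 <= `|k - k'|.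
Proof.
move=> hk hk' hne; apply: norm_intr_ge1; first by rewrite rpredB.
by rewrite subr_eq0.
Qed.

Lemma dz_min x k : k \is a Num.int -> dz x <= `|x - k|.
Proof.
move=> hk; have [->|hne] := eqVneq k (rnd x); first by [].
have h1 := int_far hk (rnd_int x) hne.
have h2 : `|k - rnd x| <= `|x - k| + `|x - rnd x|.
  rewrite (_ : k - rnd x = - (x - k) + (x - rnd x)); last by ring.
  by apply: le_trans (ler_normD _ _) _; rewrite normrN.
have := dz_le_half x; rewrite /dz => h3; lra.
Qed.

Lemma dz_intD x k : k \is a Num.int -> dz (x + k) = dz x.
Proof.
move=> hk; apply/eqP; rewrite eq_le; apply/andP; split.
  apply: le_trans (dz_min _ (rpredD (rnd_int x) hk)) _.
  by rewrite (_ : x + k - (rnd x + k) = x - rnd x) //; ring.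
apply: le_trans (dz_min _ (rpredB (rnd_int (x + k)) hk)) _.
by rewrite (_ : x - (rnd (x + k) - k) = x + k - rnd (x + k)) //; ring.
Qed.

Lemma dzN x : dz (- x) = dz x.
Proof.
apply/eqP; rewrite eq_le; apply/andP; split.
  have hN : - rnd x \is a Num.int by rewrite rpredN rnd_int.
  have := dz_min (- x) hN; move/le_trans; apply.
  by rewrite (_ : - x - - rnd x = - (x - rnd x)) ?normrN //; ring.
have hN : - rnd (- x) \is a Num.int by rewrite rpredN rnd_int.
have := dz_min x hN; move/le_trans; apply.
by rewrite /dz (_ : x - - rnd (- x) = - (- x - rnd (- x))) ?normrN //; ring.
Qed.

Lemma dzD x y : dz (x + y) <= dz x + dz y.
Proof.
apply: le_trans (dz_min _ (rpredD (rnd_int x) (rnd_int y))) _.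
rewrite (_ : x + y - (rnd x + rnd y) = (x - rnd x) + (y - rnd y)); last by ring.
exact: ler_normD.
Qed.

Lemma dz_le_norm x : dz x <= `|x|.
Proof. by have := dz_min x (rpred0 _); rewrite subr0. Qed.

Lemma dz_small x : `|x| <= 2^-1 -> dz x = `|x|.
Proof.
move=> hx; apply/eqP; rewrite eq_le dz_le_norm /=.
have [h0|hne] := eqVneq (rnd x) 0; first by rewrite /dz h0 subr0.
have h1 := int_far (rnd_int x) (rpred0 _) hne; rewrite subr0 in h1.
have h2 : `|rnd x| <= `|x| + `|x - rnd x|.
  have e : rnd x = x - (x - rnd x) by ring.
  by rewrite {1}e; exact: ler_normB.
rewrite /dz; lra.
Qed.

Lemma dz_int x : dz x = 0 -> x \is a Num.int.
Proof.
move/eqP; rewrite normr_eq0 subr_eq0 => /eqP ->; exact: rnd_int.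
Qed.

Lemma dz_double x : dz x <= 4^-1 -> dz (x + x) = 2 * dz x.
Proof.
move=> hx; have hr := rnd_int x.
apply/eqP; rewrite eq_le; apply/andP; split.
  apply: le_trans (dz_min _ (rpredD hr hr)) _.
  rewrite (_ : x + x - (rnd x + rnd x) = 2 * (x - rnd x)); last by ring.
  by rewrite normrM ger0_norm.
have [he|hne] := eqVneq (rnd (x + x)) (rnd x + rnd x).
  rewrite /dz he (_ : x + x - (rnd x + rnd x) = 2 * (x - rnd x)); last by ring.
  by rewrite normrM ger0_norm.
have h1 := int_far (rnd_int (x + x)) (rpredD hr hr) hne.
have h2 : `|rnd (x + x) - (rnd x + rnd x)| <= dz (x + x) + 2 * dz x.
  rewrite /dz (_ : rnd (x + x) - (rnd x + rnd x) =
     - (x + x - rnd (x + x)) + 2 * (x - rnd x)); last by ring.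
  apply: le_trans (ler_normD _ _) _; rewrite normrN normrM (ger0_norm (_ : 0 <= 2)) //.
lra.
Qed.

End DZ.

Section TorusNorm.
Variable R : realType.
Local Notation T := (torus R).
Local Notation pi := (@torus_pi R).

Lemma piD (x y : R) : pi x + pi y = pi (x + y).
Proof. exact: torus_add_pi. Qed.
Lemma piN (x : R) : - pi x = pi (- x).
Proof. exact: torus_opp_pi. Qed.
Lemma pi0 : pi 0 = 0 :> T.
Proof. by []. Qed.
Lemma piB (x y : R) : pi x - pi y = pi (x - y).
Proof. by rewrite piN piD. Qed.

Definition tn (t : T) : R := dz (torus_repr t).

Lemma tn_pi x : tn (pi x) = dz x.
Proof.
rewrite /tn; have h := torus_pi_repr x.
by rewrite (_ : torus_repr (pi x) = x + (torus_repr (pi x) - x)) ?dz_intD //; ring.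
Qed.

Lemma tn_ge0 t : 0 <= tn t. Proof. exact: dz_ge0. Qed.
Lemma tn_le_half t : tn t <= 2^-1. Proof. exact: dz_le_half. Qed.

Lemma tnD a b : tn (a + b) <= tn a + tn b.
Proof.
elim/torus_ind: a => x; elim/torus_ind: b => y.
by rewrite piD !tn_pi dzD.
Qed.

Lemma tnN a : tn (- a) = tn a.
Proof. by elim/torus_ind: a => x; rewrite piN !tn_pi dzN. Qed.

Lemma tn0 : tn 0 = 0.
Proof. rewrite -pi0 tn_pi dz_small ?normr0 //; lra. Qed.

Lemma tn_eq0 a : tn a = 0 -> a = 0.
Proof.
elim/torus_ind: a => x; rewrite tn_pi => /dz_int hx.
by rewrite -pi0; apply/torus_piP; rewrite subr0.
Qed.

Lemma tnB a b : tn (a - b) <= tn a + tn b.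
Proof. by rewrite -(tnN b); apply: tnD. Qed.

Lemma tnBC a b : tn (a - b) = tn (b - a).
Proof. by rewrite -tnN opprB. Qed.

Lemma tn_tri a b c : tn (a - c) <= tn (a - b) + tn (b - c).
Proof. by rewrite (_ : a - c = (a - b) + (b - c)) ?tnD // addrA subrK. Qed.

Lemma tn_double a : tn a <= 4^-1 -> tn (a + a) = 2 * tn a.
Proof. by elim/torus_ind: a => x; rewrite piD !tn_pi; apply: dz_double. Qed.

Lemma tn_le_norm x : tn (pi x) <= `|x|.
Proof. by rewrite tn_pi dz_le_norm. Qed.

Lemma tn_lift a : exists x, pi x = a /\ `|x| = tn a.
Proof.
exists (torus_repr a - rnd (torus_repr a)); split; last by [].
have h : pi (rnd (torus_repr a)) = 0.
  by rewrite -pi0; apply/torus_piP; rewrite subr0 rnd_int.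
by rewrite -piB torus_reprK h subr0.
Qed.


Definition tball (t : T) (e : R) := [set u : T | tn (u - t) < e].

Lemma tball_open (t : T) e : open (tball t e).
Proof.
elim/torus_ind: t => r.
rewrite /open /= /quotient_open openE => x0 /=.
rewrite /tball /= piB tn_pi => h0.
rewrite /interior; apply/(@nbhs_normP R R^o x0); exists (e - dz (x0 - r)); first by rewrite /= subr_gt0.
move=> y /= hy; change (tn (pi y - pi r) < e); rewrite piB tn_pi.
have h1 := dzD (x0 - r) (y - x0).
have h2 := dz_le_norm (y - x0).
rewrite (_ : x0 - r + (y - x0) = y - r) in h1; last by ring.
rewrite distrC in hy; lra.
Qed.

Lemma tball_center (t : T) e : 0 < e -> tball t e t.
Proof. by rewrite /tball /= subrr tn0. Qed.

Lemma nbhs_torusP (t : T) (U : set T) :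
  nbhs t U <-> exists2 e : R, 0 < e & tball t e `<=` U.
Proof.
split; last first.
  move=> [e e0 hU]; rewrite nbhsE; exists (tball t e) => //.
  by split; [exact: tball_open | exact: tball_center].
rewrite nbhsE => -[B [oB Bt] BU].
move: Bt oB; elim/torus_ind: t => r Br.
rewrite /open /= /quotient_open openE => /(_ r Br); rewrite /interior => /(@nbhs_normP R R^o r) [e e0 he].
exists e => // u; rewrite /tball /= => hu.
have [z [hz1 hz2]] := tn_lift (u - pi r).
apply: BU; have -> : u = pi (r + z) by rewrite -piD hz1 addrC subrK.
apply: he => /=; rewrite (_ : r - (r + z) = - z) ?normrN; last by ring.
by rewrite hz2.
Qed.

Lemma cvg_torusP {I : Type} (F : set_system I) (f : I -> T) (t : T) :
  Filter F ->
  f @ F --> t <-> forall e : R, 0 < e -> \forall i \near F, tn (f i - t) < e.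
Proof.
move=> FF; split.
  move=> ft e e0; have /ft : nbhs t (tball t e) by apply/nbhs_torusP; exists e.
  by [].
move=> h U /nbhs_torusP [e e0 hU]; rewrite /= /nbhs /=.
by apply: filterS (h e e0) => i /hU.
Qed.

Lemma torus_compact : compact [set: T].
Proof.
have -> : [set: T] = pi @` `[0, 1]%classic.
  apply/seteqP; split => // a _.
  exists (torus_repr a - (Num.floor (torus_repr a))%:~R).
    have /andP[h1 h2] := floor_itv (torus_repr a).
    rewrite /= in_itv /=; apply/andP; split; rewrite intrD in h2; lra.
  have h : pi ((Num.floor (torus_repr a))%:~R) = 0.
    by rewrite -pi0; apply/torus_piP; rewrite subr0 intr_int.
  by rewrite -piB torus_reprK h subr0.
apply: continuous_compact; last exact: segment_compact.
apply: continuous_subspaceT; exact: pi_continuous.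
Qed.

Lemma torus_hausdorff (a b : T) :
  (forall e : R, 0 < e -> tn (a - b) < e) -> a = b.
Proof.
move=> h; apply/eqP; rewrite -subr_eq0; apply/eqP; apply: tn_eq0.
apply/eqP; rewrite eq_le tn_ge0 andbT; apply/ler_addgt0Pr => e e0; rewrite add0r.
exact/ltW/h.
Qed.

End TorusNorm.

Section TorusLim.
Variable R : realType.
Local Notation T := (torus R).

Lemma torus_cvg_unique {I : Type} (F : set_system I) (PF : ProperFilter F)
  (f : I -> T) (a b : T) : f @ F --> a -> f @ F --> b -> a = b.
Proof.
move=> /(cvg_torusP _ _ _) ha /(cvg_torusP _ _ _) hb.
apply: torus_hausdorff => e e0.
have e2 : 0 < e / 2 by rewrite divr_gt0.
have [i [h1 h2]] := filter_ex (filterI (ha _ e2) (hb _ e2)).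
have := tn_tri a (f i) b; rewrite (tnBC a (f i)) => h.
have : e / 2 + e / 2 = e by field.
lra.
Qed.

Lemma tn_tri3 (a b c d : T) : tn (a - d) <= tn (a - b) + tn (b - c) + tn (c - d).
Proof.
apply: le_trans (tn_tri a b d) _; rewrite -addrA lerD2l; exact: tn_tri.
Qed.

Lemma torus_id3 (V : zmodType) (a b c u v : V) :
  a - (b + c) = - (u + v - a) + (u - b) + (v - c).
Proof.
rewrite opprB -!addrA; congr (_ + _).
rewrite (opprD u v) addrACA addNr add0r addrCA addKr.
by rewrite opprD.
Qed.

End TorusLim.

Section Ext.
Variables (R : realType) (A : topologicalZmodType) (D : set A).
Hypothesis hD : subgroup D.
Hypothesis dD : dense D.
Local Notation T := (torus R).
Local Notation sD := (set_type D).

Lemma D0 : D 0. Proof. by case: hD. Qed.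
Lemma DB a b : D a -> D b -> D (a - b). Proof. by case: hD => _; apply. Qed.
Lemma DN a : D a -> D (- a). Proof. by move=> h; rewrite -sub0r; exact: DB D0 h. Qed.
Lemma DD a b : D a -> D b -> D (a + b).
Proof. by move=> ha hb; rewrite -(opprK b); exact: DB ha (DN hb). Qed.
Lemma DMn a n : D a -> D (a *+ n).
Proof. move=> ha; elim: n => [|n IH]; first by rewrite mulr0n; exact: D0.
by rewrite mulrS; exact: DD. Qed.

Definition mkD (a : A) (h : D a) : sD := exist _ a (mem_set h).
Lemma mkDK a (h : D a) : set_val (mkD h) = a.
Proof. by rewrite set_valE. Qed.
Lemma svP (d : sD) : D (set_val d).
Proof. by rewrite set_valE; exact: set_valP. Qed.
Lemma sv_inj (d d' : sD) : set_val d = set_val d' -> d = d'.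
Proof. by rewrite set_valE; exact: val_inj. Qed.

Lemma dense_pick (x : A) (V : set A) : nbhs x V -> exists d : sD, V (set_val d).
Proof.
rewrite nbhsE => -[B [oB Bx] BV].
have [a [Ba Da]] := dD (ex_intro _ x Bx) oB.
by exists (mkD Da); rewrite mkDK; exact: BV.
Qed.

Lemma nbhs_sD (d : sD) (U : set sD) :
  nbhs d U <-> exists2 V, nbhs (set_val d) V & forall d', V (set_val d') -> U d'.
Proof.
rewrite subspace_subtypeP {1}/nbhs /= -nbhs_subspace_in; last exact: svP.
split.
  move=> h; exists (fun y => D y -> (set_val @` U) y).
    by rewrite /within in h.
  move=> d' /(_ (svP d')) [u Uu /sv_inj <-] //.
move=> [V nV hV]; rewrite /within; apply: filterS nV => y Vy Dy.
by exists (mkD Dy); rewrite ?mkDK //; apply: hV; rewrite mkDK.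
Qed.

Definition Fx (x : A) : set_system sD :=
  [set U | exists2 V, nbhs x V & forall d : sD, V (set_val d) -> U d].

#[global] Instance Fx_filter x : ProperFilter (Fx x).
Proof.
split.
  by move=> [V /dense_pick [d Vd] hV]; exact: (hV d Vd).
split.
- by exists setT => //; exact: filterT.
- move=> P Q [V nV hV] [W nW hW]; exists (V `&` W); first exact: filterI.
  by move=> d [? ?]; split; auto.
- by move=> P Q PQ [V nV hV]; exists V => // d /hV; exact: PQ.
Qed.

Definition charD (psi : sD -> T) :=
  forall x y z : sD, set_val z = set_val x + set_val y -> psi z = psi x + psi y.

Lemma charD_B psi (hpsi : charD psi) (d d' z : sD) :
  set_val z = set_val d - set_val d' -> psi z = psi d - psi d'.
Proof.
move=> hz; have /hpsi -> : set_val d = set_val z + set_val d' by rewrite hz subrK.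
by rewrite addrK.
Qed.

Lemma charD_0 psi (hpsi : charD psi) (z : sD) : set_val z = 0 -> psi z = 0.
Proof. by move=> hz; rewrite (@charD_B psi hpsi z z z) ?subrr // hz subrr. Qed.

Lemma psi_cauchy psi : continuous psi -> charD psi -> forall (x : A) (e : R), 0 < e ->
  exists2 V, nbhs x V & forall d d' : sD, V (set_val d) -> V (set_val d') ->
     tn (psi d - psi d') < e.
Proof.
move=> cpsi hpsi x e e0.
pose z0 := mkD D0.
have : nbhs z0 (psi @^-1` tball (psi z0) e).
  by apply: cpsi; apply/nbhs_torusP; exists e.
case/nbhs_sD => V0; rewrite mkDK => nV0 hV0.
have := @sub_continuous A (x, x) V0; rewrite /= subrr => /(_ nV0).
case=> -[P Q] /= [nP nQ] PQ.
exists (P `&` Q); first exact: filterI.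
move=> d d' [Pd _] [_ Qd'].
have hz : D (set_val d - set_val d') by apply: DB; exact: svP.
have := hV0 (mkD hz); rewrite mkDK => /(_ (PQ (_, _) (conj Pd Qd'))).
rewrite /tball /= (charD_0 hpsi (mkDK D0)) subr0.
by rewrite (charD_B hpsi (mkDK hz)).
Qed.

Definition ext (psi : sD -> T) (x : A) : T := xget (0 : T) (fun t : T => psi @ Fx x --> t).

Lemma ext_cvg psi : continuous psi -> charD psi -> forall x, psi @ Fx x --> ext psi x.
Proof.
move=> cpsi hpsi x; rewrite /ext; apply: (xgetPex (0 : T) (P := fun t : T => psi @ Fx x --> t)).
have [t [_ ct]] := torus_compact (fmap_proper_filter psi (Fx_filter x)) filterT.
exists t; apply/cvg_torusP => e e0.
have e2 : 0 < e / 2 by rewrite divr_gt0.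
have [V nV hV] := psi_cauchy cpsi hpsi x e2.
have : (psi @ Fx x) (psi @` [set d | V (set_val d)]).
  by exists V => // d Vd /=; exists d.
have nb : nbhs t (tball t (e / 2)) by apply/nbhs_torusP; exists (e / 2).
move=> /ct /(_ nb) [u [[d0 Vd0 <-] hu]].
exists V => // d Vd.
have := tn_tri (psi d) (psi d0) t; have := hV _ _ Vd Vd0; rewrite /tball /= in hu.
have : e / 2 + e / 2 = e by field.
lra.
Qed.

Lemma cont_Fx (chi : A -> T) (x : A) : {for x, continuous chi} ->
  (chi \o set_val) @ Fx x --> chi x.
Proof.
move=> cx U /cx nU; exists (chi @^-1` U) => // d; exact.
Qed.

Lemma ext_val psi : continuous psi -> charD psi -> forall d, ext psi (set_val d) = psi d.
Proof.
move=> cpsi hpsi d.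
apply: (@torus_cvg_unique R _ (Fx (set_val d)) _ psi); first exact: ext_cvg.
move=> U /cpsi /nbhs_sD [V nV hV]; exists V => //.
Qed.

Lemma ext_unique psi (chi : A -> T) : continuous psi -> charD psi ->
  continuous chi -> (forall d, psi d = chi (set_val d)) -> ext psi = chi.
Proof.
move=> cpsi hpsi cchi hpc; apply/funext => x.
apply: (@torus_cvg_unique R _ (Fx x) _ psi); first exact: ext_cvg.
have e : psi = chi \o set_val by apply/funext => d; rewrite hpc.
rewrite e; apply: cont_Fx; exact: cchi.
Qed.

Lemma ext_near psi : continuous psi -> charD psi -> forall (x : A) (e : R), 0 < e ->
  exists2 V, nbhs x V & forall d : sD, V (set_val d) -> tn (psi d - ext psi x) < e.
Proof.
move=> cpsi hpsi x e e0.
have := @ext_cvg psi cpsi hpsi x; move/(cvg_torusP _ _ _) => /(_ e e0) [V nV hV].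
by exists V.
Qed.

Lemma ext_add psi : continuous psi -> charD psi -> {morph ext psi : x y / x + y}.
Proof.
move=> cpsi hpsi x y; apply: torus_hausdorff => e e0.
have e3 : 0 < e / 3 by rewrite divr_gt0.
have [V1 nV1 h1] := ext_near cpsi hpsi x e3.
have [V2 nV2 h2] := ext_near cpsi hpsi y e3.
have [V3 nV3 h3] := ext_near cpsi hpsi (x + y) e3.
have := @add_continuous A (x, y) V3 nV3.
case=> -[P Q] /= [nP nQ] PQ.
have [d1 [V1d1 Pd1]] := dense_pick (filterI nV1 nP).
have [d2 [V2d2 Qd2]] := dense_pick (filterI nV2 nQ).
have hz : D (set_val d1 + set_val d2) by apply: DD; exact: svP.
have := h3 (mkD hz); rewrite mkDK => /(_ (PQ (_, _) (conj Pd1 Qd2))).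
rewrite (hpsi d1 d2 (mkD hz) (mkDK hz)) => h.
have := h1 _ V1d1; have := h2 _ V2d2.
have ht : tn (ext psi (x + y) - (ext psi x + ext psi y)) <=
   tn (psi d1 + psi d2 - ext psi (x + y)) + tn (psi d1 - ext psi x) + tn (psi d2 - ext psi y).
  rewrite (torus_id3 _ _ _ (psi d1) (psi d2)).
  apply: le_trans (tnD _ _) _; rewrite lerD2r; apply: le_trans (tnD _ _) _.
  by rewrite tnN.
have : e / 3 + e / 3 + e / 3 = e by field.
lra.
Qed.

Lemma ext_cont psi : continuous psi -> charD psi -> continuous (ext psi).
Proof.
move=> cpsi hpsi x; apply/cvg_torusP => e e0.
have e2 : 0 < e / 2 by rewrite divr_gt0.
have [V nV hV] := ext_near cpsi hpsi x e2.
move: (nV); rewrite nbhsE => -[B [oB Bx] BV].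
rewrite /= /nbhs /=; near=> y.
have By : B y by near: y; apply: open_nbhs_nbhs.
have nBy : nbhs y V by apply: filterS BV _; apply: open_nbhs_nbhs.
have [V' nV' hV'] := ext_near cpsi hpsi y e2.
have [d [Vd V'd]] := dense_pick (filterI nBy nV').
have := hV _ Vd; have := hV' _ V'd.
have := tn_tri (ext psi y) (psi d) (ext psi x); have := tnBC (ext psi y) (psi d).
have : e / 2 + e / 2 = e by field.
lra.
Unshelve. all: by end_near. Qed.

End Ext.

Section CO.
Variable R : realType.
Local Notation T := (torus R).

Lemma cont_tball (X : topologicalType) (f : X -> T) (x : X) (e : R) :
  {for x, continuous f} -> 0 < e -> nbhs x [set y | tn (f y - f x) < e].
Proof.
move=> cf e0; have /cf : nbhs (f x) (tball (f x) e) by apply/nbhs_torusP; exists e.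
by [].
Qed.

Lemma uc_near (X : topologicalType) (psi0 : X -> T) (L : set X) (d : R) :
  continuous psi0 -> compact L -> 0 < d ->
  \forall psi \near (psi0 : {compact-open, X -> T}),
     forall l, L l -> tn (psi l - psi0 l) < d.
Proof.
move=> c0 cL d0.
have cw : near_covering_within L.
  by apply/near_covering_withinP; apply/compact_near_coveringP.
have d3 : 0 < d / 3 by rewrite divr_gt0.
apply: (cw _ (nbhs (psi0 : {compact-open, X -> T}))
           (fun psi l => tn (psi l - psi0 l) < d)).
move=> l Ll.
pose W := [set y | tn (psi0 y - psi0 l) < d / 3].
have nW : nbhs l W by exact: (cont_tball (c0 l) d3).
pose C := L `&` closure W.
have cC : compact C by apply: compact_closedI => //; exact: closed_closure.
pose O := tball (psi0 l) (2 * (d / 3)).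
have oO : open O by exact: tball_open.
have CO : psi0 @` C `<=` O.
  move=> _ [y [_ cy] <-]; rewrite /O /tball /=.
  have [z [Wz hz]] := cy _ (cont_tball (c0 y) d3).
  have := tn_tri (psi0 y) (psi0 z) (psi0 l); rewrite /W /= in Wz hz.
  have := tnBC (psi0 z) (psi0 y); lra.
exists (W, [set g : {compact-open, X -> T} | g @` C `<=` O]).
  split => //=; apply: open_nbhs_nbhs; split; first exact: compact_open_open.
  exact: CO.
case=> l' g /= [Wl' gC] Ll'.
have : O (g l') by apply: gC; exists l' => //; split => //; exact: subset_closure.
rewrite /O /tball /= => h.
have := tn_tri (g l') (psi0 l) (psi0 l'); have := tnBC (psi0 l) (psi0 l').
rewrite /W /= in Wl'; lra.
Qed.

Lemma lebesgue_torus (X : topologicalType) (chi : X -> T) (K : set X) (O : set T) :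
  continuous chi -> compact K -> open O -> chi @` K `<=` O ->
  exists2 e : R, 0 < e & forall x, K x -> tball (chi x) e `<=` O.
Proof.
move=> cchi cK oO KO.
have cw : near_covering_within K.
  by apply/near_covering_withinP; apply/compact_near_coveringP.
have := cw _ (nbhs (0 : R)^'+) (fun e x => tball (chi x) e `<=` O) _.
have P1 : forall x, K x -> \forall x' \near x & i \near (0 : R)^'+,
    K x' -> tball (chi x') i `<=` O.
  move=> x Kx.
  have : nbhs (chi x) O by apply: open_nbhs_nbhs; split => //; apply: KO; exists x.
  case/nbhs_torusP => h h0 hO.
  have h2 : 0 < h / 2 by rewrite divr_gt0.
  exists ([set y | tn (chi y - chi x) < h / 2], [set e | e < h / 2]).
    by split => //=; [exact: (cont_tball (cchi x) h2) | exact: nbhs_right_lt].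
  case=> x' e /= [hx' he] Kx' u; rewrite /tball /= => hu; apply: hO.
  rewrite /tball /=; have := tn_tri u (chi x') (chi x); lra.
move=> /(_ _ P1) hK.
have [e [e0 he]] := filter_ex (filterI (nbhs_right_gt (0 : R)) hK).
by exists e.
Qed.

End CO.

Section GroupCont.
Variable A : topologicalZmodType.

Lemma subl_cont (x : A) : continuous (fun y : A => x - y).
Proof.
move=> y; apply: (@continuous_comp _ _ _ (fun y => (x, y)) (fun p : A * A => p.1 - p.2)).
  by apply: cvg_pair => /=; [exact: cvg_cst | exact: cvg_id].
exact: sub_continuous.
Qed.

Lemma subr_cont (f : A) : continuous (fun y : A => y - f).
Proof.
move=> y; apply: (@continuous_comp _ _ _ (fun y => (y, f)) (fun p : A * A => p.1 - p.2)).
  by apply: cvg_pair => /=; [exact: cvg_id | exact: cvg_cst].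
exact: sub_continuous.
Qed.

Lemma natmul_cont (n : nat) : continuous (fun y : A => y *+ n).
Proof.
elim: n => [|n IH].
  have -> : (fun y : A => y *+ 0) = fun _ => 0 by apply/funext => y; rewrite mulr0n.
  exact: cst_continuous.
have -> : (fun y : A => y *+ n.+1) = (fun p : A * A => p.1 + p.2) \o (fun y => (y, y *+ n)).
  by apply/funext => y; rewrite /= mulrS.
move=> y; apply: continuous_comp; last exact: add_continuous.
by apply: cvg_pair; [exact: cvg_id | exact: IH].
Qed.

Lemma nbhs0_natmul (n : nat) (U : set A) : nbhs 0 U -> nbhs 0 [set y | U (y *+ n)].
Proof.
move=> nU; have := @natmul_cont n 0 U; rewrite mul0rn; exact.
Qed.

Lemma nbhs0_forall_le (M : nat) (P : nat -> set A) :
  (forall j, nbhs (0 : A) (P j)) -> nbhs (0 : A) [set y | forall j, (j <= M)%N -> P j y].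
Proof.
move=> hP; elim: M => [|M IH].
  by apply: filterS (hP 0%N) => y Py j; rewrite leqn0 => /eqP ->.
apply: filterS (filterI IH (hP M.+1)) => y [h1 h2] j; rewrite leq_eqVlt ltnS.
by case/orP => [/eqP -> //|]; exact: h1.
Qed.

End GroupCont.

Section FinCover.

Definition fin_filter (Y : Type) (Dy : set Y) : set_system (set Y) :=
  [set Q | exists S0 : set Y, [/\ finite_set S0, S0 `<=` Dy &
      forall S, S0 `<=` S -> finite_set S -> S `<=` Dy -> Q S]].

Lemma fin_filter_filter (Y : Type) (Dy : set Y) : Filter (fin_filter Dy).
Proof.
split.
- by exists set0; split => //; exact: finite_set0.
- move=> P Q [S0 [f0 s0 h0]] [S1 [f1 s1 h1]]; exists (S0 `|` S1); split.
  + by rewrite finite_setU.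
  + by move=> y [/s0|/s1].
  + move=> S sS fS SD; split.
    * by apply: h0 => //; apply: subset_trans sS => y ?; left.
    * by apply: h1 => //; apply: subset_trans sS => y ?; right.
- by move=> P Q PQ [S0 [f0 s0 h0]]; exists S0; split => // S ? ? ?; apply: PQ; apply: h0.
Qed.

Lemma fin_cover (X : topologicalType) (Y : Type) (K : set X) (Dy : set Y)
    (P : Y -> X -> Prop) :
  compact K -> (forall x, K x -> exists2 y, Dy y & \forall x' \near x, P y x') ->
  exists S : set Y, [/\ finite_set S, S `<=` Dy & forall x, K x -> exists2 y, S y & P y x].
Proof.
move=> cK hK.
have cw : near_covering_within K.
  by apply/near_covering_withinP; apply/compact_near_coveringP.
have := cw _ (fin_filter Dy) (fun S x => exists2 y, S y & P y x) (fin_filter_filter Dy).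
case.
  move=> x Kx; have [y Dyy ny] := hK x Kx.
  exists (fun x' => P y x', [set S : set Y | S y]).
    split; first exact: ny.
    exists [set y]; split; [exact: finite_set1 | by move=> z -> | by move=> S sS _ _; exact: sS].
  by case=> x' S /= [Px' Sy] _; exists y.
move=> S0 [f0 s0 h0]; exists S0; split => //.
by apply: h0.
Qed.

End FinCover.

Section Doubling.
Variable R : realType.
Local Notation T := (torus R).

Lemma doubling (m : nat) (a : T) :
  (forall j, (j <= m)%N -> tn (a *+ (2 ^ j)) < 4^-1) -> tn a * 2 ^+ m <= 4^-1.
Proof.
elim: m a => [|m IH] a h.
  by rewrite expr0 mulr1; apply: ltW; have := h 0%N (leqnn _); rewrite expn0 mulr1n.
have ha : tn a <= 4^-1 by apply: ltW; have := h 0%N (leq0n _); rewrite expn0 mulr1n.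
have h2 : forall j, (j <= m)%N -> tn ((a + a) *+ 2 ^ j) < 4^-1.
  by move=> j hj; rewrite -mulr2n -mulrnA -expnS; apply: h.
have := IH (a + a) h2; rewrite tn_double // exprS => hh.
have -> : tn a * (2 * 2 ^+ m) = 2 * tn a * 2 ^+ m by ring.
exact: hh.
Qed.

End Doubling.

Section Core.
Variables (R : realType) (A : topologicalZmodType) (D : set A).
Hypothesis hD : subgroup D.
Hypothesis dD : dense D.
Variable dist : A -> A -> R.
Hypothesis hm : forall (x : A) (U : set A),
  nbhs x U <-> exists2 e : R, 0 < e & [set y | dist x y < e] `<=` U.
Local Notation T := (torus R).

Definition Wb (n : nat) : set A := [set y | dist 0 y < n.+1%:R^-1].

Lemma nbhsW n : nbhs (0 : A) (Wb n).
Proof. by apply/hm; exists n.+1%:R^-1 => //; rewrite invr_gt0 ltr0Sn. Qed.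

Lemma W_decr m n : (m <= n)%N -> Wb n `<=` Wb m.
Proof.
move=> mn y; rewrite /Wb /= => h; apply: (lt_le_trans h).
rewrite lef_pV2 ?posrE ?ltr0Sn // ler_nat; exact: mn.
Qed.

Lemma W_base (U : set A) : nbhs 0 U -> exists n, Wb n `<=` U.
Proof.
case/hm => e e0 hU.
have ei : 0 <= e^-1 by rewrite invr_ge0 ltW.
have hb := archi_boundP ei.
set n := Num.Def.archi_bound _ in hb.
exists n => y; rewrite /Wb /= => hy; apply: hU; apply: (lt_trans hy).
have n0 : 0 < n.+1%:R :> R by rewrite ltr0Sn.
rewrite -(ltr_pM2r n0) mulVf ?gt_eqF //.
have : n%:R < n.+1%:R :> R by rewrite ltr_nat.
have : e * e^-1 = 1 by rewrite mulfV ?gt_eqF.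
nra.
Qed.

Section WithEps.
Variable eps : R.
Hypothesis eps0 : 0 < eps.

Lemma exists_m0 : exists m0 : nat, 1 <= eps * 2 ^+ m0.
Proof.
have ei : 0 <= eps^-1 by rewrite invr_ge0 ltW.
have hb := archi_boundP ei.
set n := Num.Def.archi_bound _ in hb.
exists n.
have h2 : n%:R < 2 ^+ n :> R by rewrite -natrX ltr_nat; exact: ltn_expl.
have : eps * eps^-1 = 1 by rewrite mulfV ?gt_eqF.
nra.
Qed.

End WithEps.

Lemma zid2 (a b x : A) : (x - a) - (x - b) = b - a.
Proof. by rewrite opprB addrC addrA subrK. Qed.

Lemma core (K : set A) (eps : R) : compact K -> 0 < eps ->
  exists L : set A, [/\ L `<=` D, compact L &
    forall x, K x -> exists f : nat -> A,
      [/\ forall k, D (f k),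
          forall N, nbhs x N -> exists k, N (f k) &
          forall g : A -> T, (forall a b, D a -> D b -> g (a + b) = g a + g b) ->
             (forall l, L l -> tn (g l) < 4^-1) -> forall k, tn (g (f k)) <= eps]].
Proof.
move=> cK eps0.
have [m0 hm0] := exists_m0 eps0.
pose Z k := [set y : A | forall j, (j <= k + m0)%N -> Wb k (y *+ 2 ^ j)].
have nbhsZ k : nbhs (0 : A) (Z k).
  apply: nbhs0_forall_le => j; apply: nbhs0_natmul; exact: nbhsW.
have ZW k : Z k `<=` Wb k by move=> y /(_ 0%N (leq0n _)); rewrite expn0 mulr1n.
have : forall k : nat, exists V : set A,
    [/\ nbhs (0 : A) V, V `<=` Wb k & forall a b, V a -> V b -> Z k.+1 (a - b)].
  move=> k; have := @sub_continuous A (0, 0) (Z k.+1); rewrite /= subrr.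
  move=> /(_ (nbhsZ k.+1)) [[P Q] /= [nP nQ] PQ].
  exists (P `&` Q `&` Wb k); split.
  - by apply: filterI; [exact: filterI | exact: nbhsW].
  - by move=> y [].
  - by move=> a b [[Pa _] _] [[_ Qb] _]; exact: (PQ (a, b)).
move/choice => [V hV].
pose G k := V k `&` V k.-1.
have nG k : nbhs (0 : A) (G k) by apply: filterI; case: (hV k); case: (hV k.-1).
have : forall k : nat, exists F : set A, [/\ finite_set F, F `<=` D &
    forall x, K x -> exists2 f, F f & G k (x - f)].
  move=> k; apply: (@fin_cover A A K D (fun f x => G k (x - f))) => // x Kx.
  have nGi : nbhs (0 : A) (G k)° by exact: nbhs_interior.
  have := @subl_cont A x x (G k)°; rewrite subrr => /(_ nGi).
  rewrite nbhsE => -[B [oB Bx] BG].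
  have [f [Bf Df]] := dD (ex_intro _ x Bx) oB.
  exists f => //.
  have : nbhs (x - f) (G k)°.
    by apply: open_nbhs_nbhs; split; [exact: open_interior | exact: BG].
  move=> /(@subr_cont A f x); apply: filterS => y; exact: interior_subset.
move/choice => [F hF].
have FD k : F k `<=` D by case: (hF k).
have Ffin k : finite_set (F k) by case: (hF k).
pose M k := if k is k'.+1 then
    [set c | Z k'.+1 c /\ exists a b, [/\ F k'.+1 a, F k' b & c = a - b]]
  else F 0%N.
have MD k : M k `<=` D.
  case: k => [|k] c; first exact: FD.
  by case=> _ [a [b [Fa Fb ->]]]; apply: (DB hD); [exact: (FD k.+1) | exact: (FD k)].
have Mfin k : finite_set (M k).
  case: k => [|k]; first exact: Ffin.
  apply: (@sub_finite_set _ _ [set a - b | a in F k.+1 & b in F k]).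
    by move=> c [_ [a [b [Fa Fb ->]]]]; exists a => //; exists b.
  exact: finite_image2.
have MZ k : M k.+1 `<=` Z k.+1 by move=> c [].
pose S k := [set c *+ 2 ^ j | c in M k & j in `I_(k + m0).+1].
have Sfin k : finite_set (S k) by apply: finite_image2 => //; exact: finite_II.
have SD k : S k `<=` D.
  by move=> _ [c Mc [j _ <-]]; apply: (DMn hD); exact: (MD k).
have SW k : S k.+1 `<=` Wb k.+1.
  by move=> _ [c /MZ Zc [j hj <-]]; apply: Zc; rewrite -ltnS.
pose L := [set (0 : A)] `|` \bigcup_k S k.
exists L; split.
- by move=> y [->|[k _ /SD]] //; exact: (D0 hD).
- move=> GG PG GL.
  have [c0|nc0] := pselect (cluster GG 0).
    by exists 0; split => //; left.
  move: nc0; rewrite /cluster /= => /existsNP [E /existsNP [B /not_implyP [GE]]].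
  move=> /not_implyP [nB hEB].
  have [n WnB] := W_base nB.
  pose Phi := [set (0 : A)] `|` \bigcup_(k in `I_n.+1) S k.
  have Phifin : finite_set Phi.
    rewrite finite_setU; split; first exact: finite_set1.
    by apply: bigcup_finite => // k _; exact: Sfin.
  have GPhi : GG Phi.
    apply: filterS (filterI GL GE) => y [[->|[k _ Sk]] Ey]; first by left.
    have [kn|nk] := ltnP k n.+1; first by right; exists k.
    exfalso; apply: hEB; exists y; split => //; apply: WnB.
    case: k Sk nk => // k Sk nk.
    by apply: (W_decr (ltnW nk)); apply: SW.
  have [p [Phip cp]] := finite_compact Phifin PG GPhi.
  exists p; split => //.
  by case: Phip => [->|[k _ Sk]]; [left | right; exists k].
- move=> x Kx.
  have : forall k, exists f, F k f /\ G k (x - f).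
    by move=> k; case: (hF k) => _ _ /(_ x Kx) [f Ff Gf]; exists f.
  move/choice => [f hf].
  exists f; split.
  + by move=> k; apply: (FD k); case: (hf k).
  + move=> N nN.
    have := @subl_cont A x 0 N; rewrite subr0 => /(_ nN) /W_base [n hn].
    exists n; have := hn (x - f n); rewrite /preimage /= subKr; apply.
    by case: (hf n) => _ [Vn _]; case: (hV n) => _ VW _; exact: VW.
  + move=> g hg hL.
    have g0 : g 0 = 0.
      have := hg 0 0 (D0 hD) (D0 hD); rewrite addr0 => h.
      by apply: (@addrI _ (g 0)); rewrite addr0 -h.
    have gmul c n : D c -> g (c *+ n) = g c *+ n.
      move=> Dc; elim: n => [|n IH]; first by rewrite !mulr0n.
      by rewrite !mulrS hg ?IH //; exact: (DMn hD).
    pose c k := if k is k'.+1 then f k'.+1 - f k' else f 0%N.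
    have cM k : M k (c k).
      case: k => [|k]; first by case: (hf 0%N).
      split; last first.
        by exists (f k.+1), (f k); split => //; [case: (hf k.+1) | case: (hf k)].
      rewrite /c -(zid2 _ _ x).
      case: (hV k) => _ _; apply.
        by case: (hf k) => _ [].
      by case: (hf k.+1) => _ [].
    have cD k : D (c k) by exact: (MD k).
    have fD k : D (f k) by apply: (FD k); case: (hf k).
    have bc k : tn (g (c k)) * 2 ^+ k <= eps / 4.
      have hp : forall j, (j <= k + m0)%N -> tn (g (c k) *+ 2 ^ j) < 4^-1.
        move=> j hj; rewrite -gmul //; apply: hL; right; exists k => //.
        by exists (c k) => //; exists j => //; rewrite /= ltnS.
      have := doubling hp; rewrite exprD => h1.
      have t0 := tn_ge0 (g (c k)).
      have p0 : 0 < (2 : R) ^+ k by rewrite exprn_gt0.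
      have q0 : 0 < (2 : R) ^+ m0 by rewrite exprn_gt0.
      nra.
    have claim k : tn (g (f k)) * 2 ^+ k <= eps * (2 ^+ k / 2 - 4^-1).
      elim: k => [|k IH].
        by have := bc 0%N; rewrite /c expr0 !mulr1; lra.
      have -> : f k.+1 = f k + c k.+1 by rewrite /c addrC subrK.
      rewrite hg // exprS.
      have h1 := tnD (g (f k)) (g (c k.+1)).
      have h2 := bc k.+1; rewrite exprS in h2.
      have p0 : 0 < (2 : R) ^+ k by rewrite exprn_gt0.
      nra.
    move=> k; have := claim k.
    have p0 : 0 < (2 : R) ^+ k by rewrite exprn_gt0.
    have := tn_ge0 (g (f k)).
    nra.
Qed.

End Core.

Section MainSec.
Variables (R : realType) (A : topologicalZmodType) (D : set A).
Hypothesis hD : subgroup D.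
Hypothesis dD : dense D.
Local Notation T := (torus R).
Local Notation sD := (set_type D).

Lemma set_val_cont : continuous (set_val : sD -> A).
Proof.
by move=> d U nU; apply/nbhs_sD; exists U.
Qed.

Lemma compact_sD (L : set A) : L `<=` D -> compact L ->
  compact (set_val @^-1` L : set sD).
Proof.
move=> LD cL G PG GL.
have [p [Lp cp]] := cL _ (fmap_proper_filter set_val PG) GL.
pose q := mkD (LD p Lp).
exists q; split; first by rewrite /= mkDK.
move=> E B GE /nbhs_sD [V]; rewrite mkDK => nV hV.
have : (set_val @ G) (set_val @` E).
  by apply: (@filterS _ G _ E) => // e Ee; exists e.
move=> /cp /(_ nV) [_ [[e Ee <-] Ve]].
by exists e; split => //; exact: hV.
Qed.

Lemma restr_char (chi : A -> T) : is_character chi ->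
  is_character_on (fun d : sD => chi (set_val d)).
Proof.
move=> [cchi hchi]; split.
  by move=> d; apply: continuous_comp; [exact: set_val_cont | exact: cchi].
by move=> x y z ->; rewrite hchi.
Qed.

End MainSec.

Lemma restriction_cont (R : realType) (A : topologicalZmodType) (D : set A) :
  continuous (@restriction R A D).
Proof.
move=> chi.
have FF : Filter (@restriction R A D @ nbhs (chi : {compact-open, A -> torus R})).
  exact: fmap_filter.
apply: (proj2 (@compact_open_cvgP (set_type D) (torus R) _ (@restriction R A D chi) FF)).
move=> K O cK oO hKO.
have cK' : compact (set_val @` K).
  by apply: continuous_compact => //; apply: continuous_subspaceT; exact: set_val_cont.
have : nbhs (chi : {compact-open, A -> torus R}) [set h | h @` (set_val @` K) `<=` O].
  apply: open_nbhs_nbhs; split; first exact: compact_open_open.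
  by move=> _ [_ [d Kd <-] <-]; apply: hKO; exists d.
by apply: filterS => h hh _ [d Kd <-]; apply: hh; exists (set_val d) => //.
Qed.

Theorem mainTheorem12 (R : realType) (A : topologicalZmodType) (D : set A) :
  metrizable R A -> subgroup D -> dense D ->
  [/\ @restriction R A D @` @dual R A `<=` @dual_on R A D,
      (forall chi psi, chi \in @dual R A -> psi \in @dual R A ->
         @restriction R A D (chi \+ psi) = @restriction R A D chi \+ @restriction R A D psi),
      {within @dual R A, continuous @restriction R A D} &
      exists s : {compact-open, set_type D -> torus R} ->
                 {compact-open, A -> torus R},
        [/\ s @` @dual_on R A D `<=` @dual R A,
            {in @dual R A, cancel (@restriction R A D) s},
            {in @dual_on R A D, cancel s (@restriction R A D)} &
            {within @dual_on R A D, continuous s}]].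
Proof.
move=> [dist [_ _ _ _ hm]] hD dD.
split.
- by move=> _ [chi hchi <-]; exact: (@restr_char R A D chi hchi).
- by [].
- by apply: continuous_subspaceT; exact: restriction_cont.
exists (fun psi => ext psi : {compact-open, A -> torus R}); split.
- move=> _ [psi [cpsi hpsi] <-]; split; [exact: ext_cont | exact: ext_add].
- move=> chi /set_mem hchi /=.
  have [cr hr] := @restr_char R A D chi hchi.
  apply: ext_unique => //; case: hchi => //.
- move=> psi /set_mem [cpsi hpsi] /=.
  apply/funext => d; rewrite /restriction; exact: ext_val.
apply/subspace_continuousP => psi0 [cpsi0 hpsi0].
apply/compact_open_cvgP => K O cK oO hKO.
have [e e0 he] := lebesgue_torus (ext_cont hD dD cpsi0 hpsi0) cK oO hKO.
have e2 : 0 < e / 2 by rewrite divr_gt0.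
have e4 : 0 < e / 4 by rewrite divr_gt0.
have [L [LD cL hL]] := core hD dD hm cK e2.
have cL' := compact_sD LD cL.
have q0 : 0 < 4^-1 :> R by rewrite invr_gt0.
have := uc_near cpsi0 cL' q0.
rewrite /within /=; apply: filterS => psi hpsi [cpsi hpsi'].
move=> _ [x Kx <-]; apply: (he x Kx); rewrite /tball /=.
pose g (a : A) : torus R := match pselect (D a) with
  | left h => psi (mkD h) - psi0 (mkD h) | right _ => 0 end.
have gE a (h : D a) : g a = psi (mkD h) - psi0 (mkD h).
  rewrite /g; case: pselect => [h'|//].
  by have -> : mkD h' = mkD h by apply: sv_inj; rewrite !mkDK.
have gadd : forall a b, D a -> D b -> g (a + b) = g a + g b.
  move=> a b Da Db; have Dab := DD hD Da Db.
  rewrite (gE _ Dab) (gE _ Da) (gE _ Db).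
  rewrite (hpsi' (mkD Da) (mkD Db) (mkD Dab)) ?mkDK //.
  rewrite (hpsi0 (mkD Da) (mkD Db) (mkD Dab)) ?mkDK //.
  by rewrite opprD addrACA.
have gL : forall l, L l -> tn (g l) < 4^-1.
  move=> l Ll; rewrite (gE _ (LD l Ll)); apply: hpsi.
  by rewrite /= mkDK.
have [f [fD fN fb]] := hL x Kx.
have [V1 nV1 h1] := ext_near hD dD cpsi hpsi' x e4.
have [V2 nV2 h2] := ext_near hD dD cpsi0 hpsi0 x e4.
have [k [V1k V2k]] := fN _ (filterI nV1 nV2).
pose d := mkD (fD k).
have := h1 d; rewrite mkDK => /(_ V1k) k1.
have := h2 d; rewrite mkDK => /(_ V2k) k2.
have := fb g gadd gL k; rewrite (gE _ (fD k)) -/d => k3.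
have := tn_tri3 (ext psi x) (psi d) (psi0 d) (ext psi0 x).
have := tnBC (ext psi x) (psi d).
have : e / 4 + e / 2 + e / 4 = e by field.
lra.
Qed.
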